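(* The set $A = \{2^j : j \geq 2\} \cup \{3^k : k \geq 2\}$ is fractionally dense and contains no arithmetic progression of length three.
   Context: $\mathbb{N} = \{1,2,3,\ldots\}$. For $A \subseteq \mathbb{N}$, the quotient set is $R(A) = \{a/a' : a, a' \in A\}$, and $A$ is called fractionally dense if the closure of $R(A)$ in $\mathbb{R}$ equals $[0,\infty)$. An arithmetic progression of length three in $A$ is a triple $c, c+d, c+2d$ of elements of $A$ with $d \geq 1$ an integer. *)

(* Defs.v *)
From Stdlib Require Import Reals Lra Lia.
Open Scope R_scope.

(* Subsets of N = {1,2,3,...} are predicates on nat; membership implies n >= 1. *)

Definition quotient_set (A : nat -> Prop) (x : R) : Prop :=
  exists a a' : nat, A a /\ A a' /\ x = INR a / INR a'.

Definition closure_R (S : R -> Prop) (x : R) : Prop :=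
  forall eps : R, 0 < eps -> exists y : R, S y /\ Rabs (y - x) < eps.

Definition fractionally_dense (A : nat -> Prop) : Prop :=
  (forall a : nat, A a -> (1 <= a)%nat) /\
  (forall x : R, closure_R (quotient_set A) x <-> 0 <= x).

Definition has_3AP (A : nat -> Prop) : Prop :=
  exists c d : nat, (1 <= d)%nat /\ A c /\ A (c + d)%nat /\ A (c + 2 * d)%nat.

Definition A_23 (n : nat) : Prop :=
  (exists j : nat, (2 <= j)%nat /\ n = (2 ^ j)%nat) \/
  (exists k : nat, (2 <= k)%nat /\ n = (3 ^ k)%nat).

(* Main.v *)
Require Import Defs.
From Stdlib Require Import Reals Lra Lia Arith.
Module NatPart.
Local Open Scope nat_scope.

Lemma bounded_dec (P : nat -> Prop) (Pd : forall n, P n \/ ~ P n) (M : nat) :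
  (exists b, b <= M /\ P b) \/ (forall b, b <= M -> ~ P b).
Proof.
  induction M as [|M IH].
  - destruct (Pd 0); [left; exists 0; auto | right; intros b Hb; replace b with 0 by lia; auto].
  - destruct IH as [[b [Hb Pb]]|H].
    + left; exists b; split; auto.
    + destruct (Pd (S M)) as [HP|HP].
      * left; exists (S M); auto.
      * right; intros b Hb. destruct (Nat.eq_dec b (S M)); [subst; auto| apply H; lia].
Qed.

Lemma pigeon (N : nat) (f : nat -> nat) :
  (forall b, b <= N -> f b < N) -> exists b b', b < b' <= N /\ f b = f b'.
Proof.
  revert f. induction N as [|N IH]; intros f Hf.
  - specialize (Hf 0 (le_n 0)). lia.
  - destruct (bounded_dec (fun b => f b = f (S N)) (fun n => ltac:(destruct (Nat.eq_dec (f n) (f (S N))); auto)) N)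
      as [[b [Hb E]]|Hno].
    + exists b, (S N). split; [lia|auto].
    + destruct (Nat.eq_dec (f (S N)) N) as [EN|NN].
      * destruct (IH f) as [b [b' [Hbb E]]].
        { intros b Hb. specialize (Hf b ltac:(lia)). specialize (Hno b Hb). lia. }
        exists b, b'. split; [lia|auto].
      * pose (g := fun b => if Nat.eq_dec (f b) N then f (S N) else f b).
        destruct (IH g) as [b [b' [Hbb E]]].
        { intros b Hb. unfold g. pose proof (Hf b ltac:(lia)). pose proof (Hf (S N) ltac:(lia)).
          destruct (Nat.eq_dec (f b) N); lia. }
        exists b, b'. split; [lia|]. unfold g in E.
        pose proof (Hno b ltac:(lia)). pose proof (Hno b' ltac:(lia)).
        destruct (Nat.eq_dec (f b) N); destruct (Nat.eq_dec (f b') N); lia.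
Qed.
Lemma core (N q A T U V : nat) : 0 < A -> A <= T -> T < 2 * A -> A * U <= T * V ->
  q * A <= N * (T - A) < (q + 1) * A ->
  q * (A * U) <= N * (T * V - A * U) < (q + 1) * (A * U) ->
  V < U -> N * (U - V) < V.
Proof.
  intros HA H1 H2 H3 [H4 H5] [H6 H7] HUV.
  assert (E1 : q * A * U <= N * (T - A) * U) by (apply Nat.mul_le_mono_r; lia).
  assert (E2 : N * (T - A) * U < (q + 1) * A * U).
  { apply Nat.mul_lt_mono_pos_r; lia. }
  assert (HT : N * T * (U - V) < T * V) by nia.
  nia.
Qed.
Lemma core2 (N q A T U V : nat) : 0 < A -> A <= T -> T < 2 * A -> A * U <= T * V ->
  q * A <= N * (T - A) < (q + 1) * A ->
  q * (A * U) <= N * (T * V - A * U) < (q + 1) * (A * U) ->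
  U < V -> 0 < U -> N * (V - U) < V.
Proof.
  intros HA H1 H2 H3 [H4 H5] [H6 H7] HUV HU.
  assert (E1 : q * A * U <= N * (T - A) * U) by (apply Nat.mul_le_mono_r; lia).
  assert (E2 : N * (T - A) * U < (q + 1) * A * U).
  { apply Nat.mul_lt_mono_pos_r; lia. }
  assert (EQ : T * V - A * U = T * (V - U) + (T - A) * U) by nia.
  rewrite EQ in H7.
  assert (HT : N * T * (V - U) < T * V) by nia.
  nia.
Qed.
Lemma pow3_mod8 (a : nat) : exists m, (3 ^ a = 8 * m + 1 \/ 3 ^ a = 8 * m + 3)%nat.
Proof.
  induction a as [|a [m [H|H]]].
  - exists 0%nat. simpl. lia.
  - exists (3*m)%nat. right. simpl. lia.
  - exists (3*m+1)%nat. left. simpl. lia.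
Qed.

Lemma divb (x A : nat) : 0 < A -> (x / A) * A <= x < (x / A + 1) * A.
Proof.
  intros H. pose proof (Nat.div_mod x A ltac:(lia)). pose proof (Nat.mod_upper_bound x A ltac:(lia)). nia.
Qed.

Lemma near1 (N : nat) : 1 <= N -> exists c d, 1 <= c /\
  ((3 ^ c < 2 ^ d /\ N * (2 ^ d - 3 ^ c) < 3 ^ c) \/ (2 ^ d < 3 ^ c /\ N * (3 ^ c - 2 ^ d) < 3 ^ c)).
Proof.
  intros HN.
  set (L := fun b => Nat.log2 (3 ^ b)).
  assert (HL : forall b, 2 ^ L b <= 3 ^ b < 2 * 2 ^ L b).
  { intros b. apply Nat.log2_spec. pose proof (Nat.pow_nonzero 3 b). lia. }
  destruct (pigeon N (fun b => N * (3 ^ b - 2 ^ L b) / 2 ^ L b)) as [b [b' [Hbb E]]].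
  { intros b _. pose proof (HL b). pose proof (Nat.pow_nonzero 2 (L b)).
    apply Nat.Div0.div_lt_upper_bound. nia. }
  set (q := N * (3 ^ b - 2 ^ L b) / 2 ^ L b) in E.
  assert (Hq1 := divb (N * (3 ^ b - 2 ^ L b)) (2 ^ L b) ltac:(pose proof (Nat.pow_nonzero 2 (L b)); lia)).
  assert (Hq2 := divb (N * (3 ^ b' - 2 ^ L b')) (2 ^ L b') ltac:(pose proof (Nat.pow_nonzero 2 (L b')); lia)).
  fold q in Hq1. rewrite <- E in Hq2. fold q in Hq2.
  assert (Hle : L b <= L b').
  { apply Nat.log2_le_mono. apply Nat.pow_le_mono_r; lia. }
  exists (b' - b), (L b' - L b).
  assert (EA : 2 ^ L b' = 2 ^ L b * 2 ^ (L b' - L b)).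
  { rewrite <- Nat.pow_add_r. f_equal. lia. }
  assert (ET : 3 ^ b' = 3 ^ b * 3 ^ (b' - b)).
  { rewrite <- Nat.pow_add_r. f_equal. lia. }
  pose proof (HL b) as H1. pose proof (HL b') as H2.
  rewrite EA, ET in Hq2, H2.
  set (A := 2 ^ L b) in *. set (T := 3 ^ b) in *.
  set (U := 2 ^ (L b' - L b)) in *. set (V := 3 ^ (b' - b)) in *.
  assert (HA : 0 < A) by (pose proof (Nat.pow_nonzero 2 (L b)); lia).
  assert (HU : 0 < U) by (pose proof (Nat.pow_nonzero 2 (L b' - L b)); lia).
  split; [lia|].
  assert (UV : U <> V).
  { destruct (pow3_mod8 (b' - b)) as [m Hm]. fold V in Hm.
    assert (3 ^ 1 <= V) by (apply Nat.pow_le_mono_r; lia). simpl in H.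
    unfold U. destruct (L b' - L b) as [|d].
    - simpl. lia.
    - rewrite Nat.pow_succ_r'. lia. }
  destruct (proj1 (Nat.lt_gt_cases U V) UV) as [LT|GT].
  - right. split; [auto|]. apply (core2 N q A T U V); auto; lia.
  - left. split; [auto|]. apply (core N q A T U V); auto; lia.
Qed.
End NatPart.
Open Scope R_scope.

Lemma approx_up (r s x : R) : 1 < r -> 0 < s -> s <= x ->
  exists n : nat, x <= s * r ^ n <= x * r.
Proof.
  intros Hr Hs Hsx.
  assert (Hm : forall m : nat, x <= s * r ^ m -> exists n : nat, x <= s * r ^ n <= x * r).
  { induction m as [|m IH]; intros H.
    - exists 0%nat. simpl in *. split; nra.
    - destruct (Rle_lt_dec x (s * r ^ m)) as [H1|H1]; [apply IH; auto|].
      exists (S m). simpl. split; [simpl in H; lra| nra]. }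
  destruct (Pow_x_infinity r ltac:(rewrite Rabs_pos_eq; lra) (x / s)) as [N HN].
  specialize (HN N (le_n N)). rewrite Rabs_pos_eq in HN by (apply pow_le; lra).
  apply (Hm N). apply Rge_le in HN.
  apply (Rmult_le_compat_l s) in HN; [|lra]. unfold Rdiv in HN.
  replace (s * (x * / s)) with x in HN by (field; lra). exact HN.
Qed.

Lemma approx_down (r s x : R) : 0 < r < 1 -> 0 < x -> x <= s ->
  exists n : nat, x * r <= s * r ^ n <= x.
Proof.
  intros Hr Hx Hsx.
  assert (Hm : forall m : nat, s * r ^ m <= x -> exists n : nat, x * r <= s * r ^ n <= x).
  { induction m as [|m IH]; intros H.
    - exists 0%nat. simpl in *. split; nra.
    - destruct (Rle_lt_dec (s * r ^ m) x) as [H1|H1]; [apply IH; auto|].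
      exists (S m). simpl. split; [nra| simpl in H; lra]. }
  destruct (pow_lt_1_zero r ltac:(rewrite Rabs_pos_eq; lra) (x / s) ltac:(apply Rdiv_lt_0_compat; lra)) as [N HN].
  specialize (HN N (le_n N)). rewrite Rabs_pos_eq in HN by (apply pow_le; lra).
  apply (Hm N).
  apply (Rmult_lt_compat_l s) in HN; [|lra]. unfold Rdiv in HN.
  replace (s * (x * / s)) with x in HN by (field; lra). lra.
Qed.

Lemma Q_in (j k : nat) : (2 <= j)%nat -> (2 <= k)%nat -> quotient_set A_23 (2 ^ j / 3 ^ k).
Proof.
  intros Hj Hk. exists (2 ^ j)%nat, (3 ^ k)%nat. split; [left; eauto|]. split; [right; eauto|].
  rewrite !pow_INR. simpl (INR 2). simpl (INR 3). f_equal; f_equal; ring.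
Qed.

Lemma big_pow (b : R) (B : R) : 1 < b -> exists K : nat, (2 <= K)%nat /\ B <= b ^ K.
Proof.
  intros Hb. destruct (Pow_x_infinity b ltac:(rewrite Rabs_pos_eq; lra) B) as [N HN].
  exists (Nat.max N 2). split; [lia|]. specialize (HN (Nat.max N 2) ltac:(lia)).
  rewrite Rabs_pos_eq in HN by (apply pow_le; lra). lra.
Qed.
Lemma pow2_ge (j : nat) : (2 <= j)%nat -> exists p, (2 ^ j = 4 * p /\ 1 <= p)%nat.
Proof.
  intros H. exists (2 ^ (j - 2))%nat. split.
  - replace j with (2 + (j-2))%nat at 1 by lia. rewrite Nat.pow_add_r. reflexivity.
  - assert (2 ^ 0 <= 2 ^ (j-2))%nat by (apply Nat.pow_le_mono_r; lia). simpl in H0. lia.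
Qed.

Lemma pow3_mod8' (a : nat) : exists m, (3 ^ a = 8 * m + 1 \/ 3 ^ a = 8 * m + 3)%nat.
Proof.
  induction a as [|a [m [H|H]]].
  - exists 0%nat. simpl. lia.
  - exists (3*m)%nat. right. simpl. lia.
  - exists (3*m+1)%nat. left. simpl. lia.
Qed.

Lemma pow_step (B b c : nat) : (2 <= B)%nat -> (B ^ b < B ^ c)%nat -> (B * B ^ b <= B ^ c)%nat.
Proof.
  intros HB H. assert (b < c)%nat.
  { destruct (Nat.lt_ge_cases b c); auto.
    assert (B ^ c <= B ^ b)%nat by (apply Nat.pow_le_mono_r; lia). lia. }
  change (B * B ^ b)%nat with (B ^ S b)%nat. apply Nat.pow_le_mono_r; lia.
Qed.

Lemma no3AP : ~ has_3AP A_23.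
Proof.
  intros [c [d [Hd [Hx [Hy Hz]]]]].
  assert (Hy4 : (4 <= c + d)%nat).
  { destruct Hy as [[j [Hj E]]|[k [Hk E]]]; rewrite E.
    - destruct (pow2_ge j Hj) as [p [Ep Hp]]. lia.
    - assert (3^2 <= 3^k)%nat by (apply Nat.pow_le_mono_r; lia). simpl in H. lia. }
  assert (Hx4 : (4 <= c)%nat).
  { destruct Hx as [[j [Hj E]]|[k [Hk E]]]; rewrite E.
    - destruct (pow2_ge j Hj) as [p [Ep Hp]]. lia.
    - assert (3^2 <= 3^k)%nat by (apply Nat.pow_le_mono_r; lia). simpl in H. lia. }
  destruct Hy as [[b [Hb Eb]]|[b [Hb Eb]]]; destruct Hz as [[e [He Ee]]|[e [He Ee]]].
  - assert (2 * 2^b <= 2^e)%nat by (apply pow_step; lia). lia.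
  - destruct Hx as [[a [Ha Ea]]|[a [Ha Ea]]].
    + destruct (pow2_ge a Ha) as [p [Ep _]]. destruct (pow3_mod8' e) as [m [Hm|Hm]]; lia.
    + destruct (pow2_ge b Hb) as [p [Ep _]]. destruct (pow3_mod8' e) as [m [Hm|Hm]];
      destruct (pow3_mod8' a) as [m' [Hm'|Hm']]; lia.
  - destruct Hx as [[a [Ha Ea]]|[a [Ha Ea]]].
    + destruct (pow2_ge a Ha) as [p [Ep _]]. destruct (pow2_ge e He) as [q [Eq _]].
      destruct (pow3_mod8' b) as [m [Hm|Hm]]; lia.
    + destruct (pow2_ge e He) as [p [Ep _]]. destruct (pow3_mod8' a) as [m [Hm|Hm]]; lia.
  - assert (3 * 3^b <= 3^e)%nat by (apply pow_step; lia). lia.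
Qed.

Lemma INR2 : INR 2 = 2. Proof. simpl; ring. Qed.
Lemma INR3 : INR 3 = 3. Proof. simpl; ring. Qed.

Lemma split_pow (j k d c n : nat) :
  2 ^ (j + d * n) / 3 ^ (k + c * n) = 2 ^ j / 3 ^ k * (2 ^ d / 3 ^ c) ^ n.
Proof.
  rewrite !pow_add, !pow_mult. unfold Rdiv. rewrite Rpow_mult_distr, pow_inv.
  assert (0 < 3 ^ k) by (apply pow_lt; lra).
  assert (0 < (3 ^ c) ^ n) by (apply pow_lt, pow_lt; lra).
  field. lra.
Qed.

Lemma dense_pos (x eps : R) : 0 < x -> 0 < eps ->
  exists y, quotient_set A_23 y /\ Rabs (y - x) < eps.
Proof.
  intros Hx He.
  destruct (archimed_cor1 (eps / x) ltac:(apply Rdiv_lt_0_compat; lra)) as [N [HN HN0]].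
  assert (HNr : 0 < INR N) by (apply lt_0_INR; lia).
  destruct (NatPart.near1 N ltac:(lia)) as [c [d [Hc [[L1 L2]|[L1 L2]]]]].
  -
    apply lt_INR in L2. rewrite mult_INR, minus_INR in L2 by lia. apply lt_INR in L1.
    rewrite !pow_INR, INR2, INR3 in L1, L2.
    set (r := 2 ^ d / 3 ^ c).
    assert (H3 : 0 < 3 ^ c) by (apply pow_lt; lra).
    assert (Hr1 : 1 < r) by (unfold r; apply (Rmult_lt_reg_r (3 ^ c)); [lra|]; field_simplify; lra).
    assert (Hr2 : x * (r - 1) < eps).
    { assert (r - 1 < / INR N).
      { unfold r. apply (Rmult_lt_reg_r (INR N * 3 ^ c)); [nra|].
        field_simplify; try lra. }
      assert (r - 1 < eps / x) by lra.
      apply (Rmult_lt_compat_l x) in H0; [|lra]. unfold Rdiv in H0.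
      replace (x * (eps * / x)) with eps in H0 by (field; lra). lra. }
    destruct (big_pow 3 (4 / x) ltac:(lra)) as [K [HK HK2]].
    assert (H3K : 0 < 3 ^ K) by (apply pow_lt; lra).
    assert (Hs : 4 / 3 ^ K <= x).
    { apply (Rmult_le_reg_r (3 ^ K)); [lra|]. unfold Rdiv. rewrite Rmult_assoc, Rinv_l by lra.
      apply (Rmult_le_compat_l x) in HK2; [|lra]. unfold Rdiv in HK2.
      replace (x * (4 * / x)) with 4 in HK2 by (field; lra). lra. }
    destruct (approx_up r (4 / 3 ^ K) x Hr1 ltac:(apply Rdiv_lt_0_compat; lra) Hs) as [n Hn].
    exists (2 ^ (2 + d * n) / 3 ^ (K + c * n)). split.
    + apply Q_in; lia.
    + rewrite split_pow. replace (2 ^ 2) with 4 by ring. fold r.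
      rewrite Rabs_pos_eq by lra. nra.
  -
    apply lt_INR in L2. rewrite mult_INR, minus_INR in L2 by lia. apply lt_INR in L1.
    rewrite !pow_INR, INR2, INR3 in L1, L2.
    set (r := 2 ^ d / 3 ^ c).
    assert (H3 : 0 < 3 ^ c) by (apply pow_lt; lra).
    assert (H2 : 0 < 2 ^ d) by (apply pow_lt; lra).
    assert (Hr1 : 0 < r < 1).
    { unfold r. split; [apply Rdiv_lt_0_compat; lra|].
      apply (Rmult_lt_reg_r (3 ^ c)); [lra|]; field_simplify; lra. }
    assert (Hr2 : x * (1 - r) < eps).
    { assert (1 - r < / INR N).
      { unfold r. apply (Rmult_lt_reg_r (INR N * 3 ^ c)); [nra|].
        field_simplify; try lra. }
      assert (1 - r < eps / x) by lra.
      apply (Rmult_lt_compat_l x) in H0; [|lra]. unfold Rdiv in H0.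
      replace (x * (eps * / x)) with eps in H0 by (field; lra). lra. }
    destruct (big_pow 2 (9 * x) ltac:(lra)) as [J [HJ HJ2]].
    assert (Hs : x <= 2 ^ J / 3 ^ 2). { simpl. lra. }
    destruct (approx_down r (2 ^ J / 3 ^ 2) x Hr1 Hx Hs) as [n Hn].
    exists (2 ^ (J + d * n) / 3 ^ (2 + c * n)). split.
    + apply Q_in; lia.
    + rewrite split_pow. fold r.
      rewrite Rabs_left1 by lra. nra.
Qed.

Lemma dense_all (x eps : R) : 0 <= x -> 0 < eps ->
  exists y, quotient_set A_23 y /\ Rabs (y - x) < eps.
Proof.
  intros Hx He. destruct (Rle_lt_or_eq_dec 0 x Hx) as [Hx'|Hx']; [apply dense_pos; auto|].
  subst x. destruct (big_pow 3 (8 / eps) ltac:(lra)) as [K [HK HK2]].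
  assert (H3K : 0 < 3 ^ K) by (apply pow_lt; lra).
  exists (2 ^ 2 / 3 ^ K). split; [apply Q_in; lia|].
  rewrite Rminus_0_r, Rabs_pos_eq by (apply Rlt_le, Rdiv_lt_0_compat; lra).
  apply (Rmult_lt_reg_r (3 ^ K)); [lra|]. unfold Rdiv. rewrite Rmult_assoc, Rinv_l by lra.
  apply (Rmult_le_compat_l eps) in HK2; [|lra]. unfold Rdiv in HK2.
  replace (eps * (8 * / eps)) with 8 in HK2 by (field; lra). simpl. lra.
Qed.

Theorem proposition4 : fractionally_dense A_23 /\ ~ has_3AP A_23.
Proof.
  split; [|exact no3AP]. split.
  - intros a [[j [Hj E]]|[k [Hk E]]]; subst a.
    + pose proof (Nat.pow_nonzero 2 j). lia.
    + pose proof (Nat.pow_nonzero 3 k). lia.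
  - intros x. split.
    + intros Hc. destruct (Rle_lt_dec 0 x) as [H|H]; auto.
      destruct (Hc (- x) ltac:(lra)) as [y [[a [a' [Ha [Ha' E]]]] Hy]].
      assert (0 <= y).
      { rewrite E. destruct Ha' as [[k [Hk E']]|[k [Hk E']]]; subst a';
        (apply Rle_mult_inv_pos; [apply pos_INR|apply lt_0_INR]);
        [pose proof (Nat.pow_nonzero 2 k)|pose proof (Nat.pow_nonzero 3 k)]; lia. }
      rewrite Rabs_pos_eq in Hy by lra. lra.
    + intros Hx eps He. apply dense_all; auto.
Qed.
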